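(* Let $A \in \mathbb{R}^{n\times p}$. Let $f:\mathbb{R}^n\to\mathbb{R}$ be convex, finite everywhere and Lipschitz-continuous, and let $C$ be the domain of its Fenchel conjugate $f^\ast$. Let $h:\mathbb{R}^p\to\mathbb{R}\cup\{+\infty\}$ be lower-semicontinuous, $\mu$-strongly convex and essentially smooth. Let $(\rho_t)_{t\geq1}$ be step sizes in $[0,1]$ and $y_0\in C$. Consider: (i) the generalized conditional gradient recursion: for $t\geq1$, $$x_{t-1} = \arg\min_{x\in\mathbb{R}^p} h(x) + x^\top A^\top y_{t-1} = (h^\ast)'(-A^\top y_{t-1}),\quad \bar y_{t-1}\in\arg\max_{y\in C} y^\top A x_{t-1} - f^\ast(y),\quad y_t = (1-\rho_t)y_{t-1} + \rho_t \bar y_{t-1};$$ (ii) the mirror descent recursion started from $x_0 = (h^\ast)'(-A^\top y_0)$: for $t\geq 1$, $$\bar y_{t-1} \in \arg\max_{y\in C}\ y^\top A x_{t-1} - f^\ast(y),\qquad x_t = \arg\min_{x\in\mathbb{R}^p}\ h(x) - (1-\rho_t)\, x^\top h'(x_{t-1}) + \rho_t\, x^\top A^\top \bar y_{t-1}.$$ Then these two recursions are equivalent: (with the same choices of maximizers $\bar y_{t-1}$) they generate the same sequence $(x_t)$, and $h'(x_t) = -A^\top y_t$ for all $t\geq0$.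
   Context: $h$ is essentially smooth if it is differentiable on the interior of its domain $K$ (assumed nonempty) and $\|h'(x)\|\to+\infty$ as $x$ approaches the boundary of $K$; then $h'$ is a bijection from ${\rm int}(K)$ onto $\mathbb{R}^p$, and $(h^\ast)'$ is its inverse. The Fenchel conjugate is $f^\ast(y)=\sup_z y^\top z - f(z)$; $h^\ast$ is differentiable and $(h^\ast)'(z)$ is the unique maximizer of $x^\top z - h(x)$. *)

(* Defs.v *)
From HB Require Import structures.
From mathcomp Require Import all_boot all_order all_algebra.
From mathcomp Require Import all_classical all_reals all_analysis.
Set Implicit Arguments. Unset Strict Implicit. Unset Printing Implicit Defensive.
Import Order.TTheory GRing.Theory Num.Theory.
Import numFieldNormedType.Exports.
Local Open Scope classical_set_scope.
Local Open Scope ring_scope.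

Definition dotv (R : realType) (k : nat) (u v : 'cV[R]_k) : R := (u^T *m v) 0 0.

Definition sqnorm (R : realType) (k : nat) (v : 'cV[R]_k) : R := dotv v v.

Definition convex_fun (R : realType) (k : nat) (f : 'cV[R]_k -> R) : Prop :=
  forall (x y : 'cV[R]_k) (l : R), 0 <= l <= 1 ->
    f (l *: x + (1 - l) *: y) <= l * f x + (1 - l) * f y.

(* Lipschitz continuity (norms on R^k are all equivalent; we use the
   library's norm on matrices) *)
Definition lipschitz_fun (R : realType) (k : nat) (f : 'cV[R]_k -> R) : Prop :=
  exists L : R, forall x y : 'cV[R]_k, `|f x - f y| <= L * `|x - y|.

Definition fenchel (R : realType) (k : nat) (f : 'cV[R]_k -> R) (y : 'cV[R]_k)
  : \bar R := ereal_sup [set ((dotv y z - f z)%:E) | z in [set: 'cV[R]_k]].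

Definition edom (R : realType) (k : nat) (g : 'cV[R]_k -> \bar R) : set 'cV[R]_k :=
  [set x | (g x < +oo)%E].

Definition strongly_convex (R : realType) (k : nat) (mu : R)
  (h : 'cV[R]_k -> \bar R) : Prop :=
  0 < mu /\
  forall (x y : 'cV[R]_k) (l : R), 0 < l < 1 ->
    (h (l *: x + (1 - l) *: y)%R <=
       l%:E * h x + (1 - l)%R%:E * h y - (mu / 2 * l * (1 - l) * sqnorm (x - y)%R)%R%:E)%E.

(* gradient of h at x: the vector of partial derivatives of h (which is
   finite near every interior point of its domain) *)
Definition grad (R : realType) (k : nat) (h : 'cV[R]_k -> \bar R) (x : 'cV[R]_k)
  : 'cV[R]_k :=
  \col_i ('D_(delta_mx i 0) (fun z => fine (h z)) x).

Definition essentially_smooth (R : realType) (k : nat) (h : 'cV[R]_k -> \bar R)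
  : Prop :=
  let K := edom h in
  interior K !=set0 /\
  (forall x, interior K x -> differentiable (fun z => fine (h z)) x) /\
  (forall (u : nat -> 'cV[R]_k) (b : 'cV[R]_k),
      (forall m, interior K (u m)) -> u @ \oo --> b ->
      closure K b -> ~ interior K b ->
      (fun m => `|grad h (u m)|) @ \oo --> +oo).

Definition is_argmin (R : realType) (k : nat) (phi : 'cV[R]_k -> \bar R)
  (x : 'cV[R]_k) : Prop := forall z, (phi x <= phi z)%E.

Definition is_argmax_on (R : realType) (k : nat) (C : set 'cV[R]_k)
  (psi : 'cV[R]_k -> \bar R) (yb : 'cV[R]_k) : Prop :=
  C yb /\ forall y, C y -> (psi y <= psi yb)%E.

(* generalized conditional gradient recursion (with y given by
   y_t = (1-rho_t) y_{t-1} + rho_t ybar_{t-1}): for all t >= 1,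
   x_{t-1} = argmin_x h(x) + x^T A^T y_{t-1},
   ybar_{t-1} in argmax_{y in C} y^T A x_{t-1} - f^*(y) *)
Definition gcg_rec (R : realType) (n p : nat) (A : 'M[R]_(n, p))
  (f : 'cV[R]_n -> R) (h : 'cV[R]_p -> \bar R)
  (x : nat -> 'cV[R]_p) (y ybar : nat -> 'cV[R]_n) : Prop :=
  forall s : nat,
    is_argmin (fun z => (h z + (dotv z (A^T *m y s))%:E)%E) (x s) /\
    is_argmax_on (edom (fenchel f))
      (fun w => ((dotv w (A *m x s))%:E - fenchel f w)%E) (ybar s).

Definition md_rec (R : realType) (n p : nat) (A : 'M[R]_(n, p))
  (f : 'cV[R]_n -> R) (h : 'cV[R]_p -> \bar R) (rho : nat -> R)
  (y0 : 'cV[R]_n) (x : nat -> 'cV[R]_p) (ybar : nat -> 'cV[R]_n) : Prop :=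
  is_argmin (fun z => (h z + (dotv z (A^T *m y0))%:E)%E) (x 0%N) /\
  forall s : nat,
    is_argmax_on (edom (fenchel f))
      (fun w => ((dotv w (A *m x s))%:E - fenchel f w)%E) (ybar s) /\
    is_argmin (fun z => (h z + (- (1 - rho s.+1) * dotv z (grad h (x s))
                                 + rho s.+1 * dotv z (A^T *m ybar s))%:E)%E)
              (x s.+1).

(* Main.v *)
Require Import Defs.
From HB Require Import structures.
From mathcomp Require Import all_boot all_order all_algebra.
From mathcomp Require Import all_classical all_reals all_analysis.
From mathcomp Require Import ring lra.
Import Order.TTheory GRing.Theory Num.Theory.
Import numFieldNormedType.Exports.
Local Open Scope classical_set_scope.
Local Open Scope ring_scope.
Set Implicit Arguments. Unset Strict Implicit.

Lemma dir_cvg (R : realType) (k : nat) (F : 'cV[R]_k -> R) u v :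
  differentiable F u ->
  (fun h => h^-1 *: ((F \o shift u) (h *: v) - F u)) @ 0^'+ --> 'D_v F u.
Proof.
move=> dF.
have := diff_derivable (v:=v) dF => /cvg_ex[l Hl].
rewrite /derive (cvg_lim _ Hl) //.
apply: cvg_trans Hl; apply: cvg_app; apply: within_subset => t /= /gt_eqF ->//.
Qed.

Lemma dirLB (R : realType) (k : nat) (F : 'cV[R]_k -> R) u v L e :
  differentiable F u -> 0 < e ->
  (forall t, 0 < t < e -> L <= t^-1 * (F (t *: v + u) - F u)) ->
  L <= 'D_v F u.
Proof.
move=> dF e0 H.
apply: (cvgr_to_ge (dir_cvg (v:=v) dF)); near=> t; apply: H.
apply/andP; split; near: t; [exact: nbhs_right_gt| exact: nbhs_right_lt].
Unshelve. all: by end_near.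
Qed.

Lemma dirUB (R : realType) (k : nat) (F : 'cV[R]_k -> R) u v L e :
  differentiable F u -> 0 < e ->
  (forall t, 0 < t < e -> t^-1 * (F (t *: v + u) - F u) <= L) ->
  'D_v F u <= L.
Proof.
move=> dF e0 H.
apply: (cvgr_to_le (dir_cvg (v:=v) dF)); near=> t; apply: H.
apply/andP; split; near: t; [exact: nbhs_right_gt| exact: nbhs_right_lt].
Unshelve. all: by end_near.
Qed.

Lemma dotvE (R : realType) (k : nat) (u v : 'cV[R]_k) :
  dotv u v = \sum_i u i 0 * v i 0.
Proof. by rewrite /dotv mxE; apply: eq_bigr => i _; rewrite mxE. Qed.

Lemma dotvC (R : realType) (k : nat) (u v : 'cV[R]_k) : dotv u v = dotv v u.
Proof. by rewrite !dotvE; apply: eq_bigr => i _; rewrite mulrC. Qed.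

Lemma dotvDr (R : realType) (k : nat) (u v w : 'cV[R]_k) :
  dotv u (v + w) = dotv u v + dotv u w.
Proof. by rewrite !dotvE -big_split; apply: eq_bigr => i _; rewrite mxE mulrDr. Qed.

Lemma dotvZr (R : realType) (k : nat) (a : R) (u v : 'cV[R]_k) :
  dotv u (a *: v) = a * dotv u v.
Proof. by rewrite !dotvE mulr_sumr; apply: eq_bigr => i _; rewrite mxE mulrCA. Qed.

Lemma dotvDl (R : realType) (k : nat) (u v w : 'cV[R]_k) :
  dotv (v + w) u = dotv v u + dotv w u.
Proof. by rewrite dotvC dotvDr !(dotvC u). Qed.

Lemma dotvZl (R : realType) (k : nat) (a : R) (u v : 'cV[R]_k) :
  dotv (a *: v) u = a * dotv v u.
Proof. by rewrite dotvC dotvZr dotvC. Qed.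

Lemma dotvNr (R : realType) (k : nat) (u v : 'cV[R]_k) :
  dotv u (- v) = - dotv u v.
Proof. by rewrite -scaleN1r dotvZr mulN1r. Qed.

Lemma dotvNl (R : realType) (k : nat) (u v : 'cV[R]_k) :
  dotv (- v) u = - dotv v u.
Proof. by rewrite dotvC dotvNr dotvC. Qed.

Lemma dotvBr (R : realType) (k : nat) (u v w : 'cV[R]_k) :
  dotv u (v - w) = dotv u v - dotv u w.
Proof. by rewrite dotvDr dotvNr. Qed.

Lemma dotvBl (R : realType) (k : nat) (u v w : 'cV[R]_k) :
  dotv (v - w) u = dotv v u - dotv w u.
Proof. by rewrite dotvDl dotvNl. Qed.

Lemma dotv_delta (R : realType) (k : nat) (u : 'cV[R]_k) i :
  dotv u (delta_mx i 0) = u i 0.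
Proof.
rewrite dotvE (bigD1 i) //= big1 => [|j /negPf ji]; rewrite mxE.
  by rewrite !eqxx mulr1 addr0.
by rewrite ji mulr0.
Qed.

Lemma derive_dotv (R : realType) (k : nat) (F : 'cV[R]_k -> R) u v :
  differentiable F u ->
  'D_v F u = dotv (\col_i 'D_(delta_mx i 0) F u) v.
Proof.
move=> dF; rewrite deriveE // dotvE.
have -> : 'd F u v = 'd F u (\sum_i \sum_j v i j *: delta_mx i j) by rewrite -matrix_sum_delta.
rewrite linear_sum /=.
apply: eq_bigr => i _. rewrite big_ord1 linearZ /= mxE deriveE // mulrC.
done.
Qed.

Lemma finK (R : realType) (k : nat) (h : 'cV[R]_k -> \bar R) z :
  (forall x, h x != -oo%E) -> edom h z -> h z = (fine (h z))%:E.
Proof. by move=> nm Kz; rewrite fineK // fin_numE nm -ltey. Qed.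

Lemma sqnorm_ge0 (R : realType) (k : nat) (v : 'cV[R]_k) : 0 <= sqnorm v.
Proof. by rewrite /sqnorm dotvE sumr_ge0 // => i _; rewrite -expr2 sqr_ge0. Qed.

Lemma convF (R : realType) (k : nat) (h : 'cV[R]_k -> \bar R) mu x y l :
  (forall x, h x != -oo%E) -> strongly_convex mu h ->
  edom h x -> edom h y -> 0 < l < 1 ->
  edom h (l *: x + (1 - l) *: y) /\
  fine (h (l *: x + (1 - l) *: y)) <= l * fine (h x) + (1 - l) * fine (h y).
Proof.
move=> nm [mu0 sc] Kx Ky l01.
have H := sc x y l l01; rewrite (finK nm Kx) (finK nm Ky) -!EFinM -EFinN -!EFinD in H.
have Kz : edom h (l *: x + (1 - l) *: y).
  by rewrite /edom /=; apply: le_lt_trans H _; rewrite ltry.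
split => //; move: H; rewrite (finK nm Kz) lee_fin => /le_trans; apply.
rewrite lerBlDr lerDl; case/andP: l01 => l0 l1.
by rewrite !mulr_ge0 ?sqnorm_ge0 // ?subr_ge0 ?ltW // divr_ge0 // ltW.
Qed.

Lemma norm_delta (R : realType) (k : nat) (i : 'I_k) :
  `|delta_mx i 0 : 'cV[R]_k| <= 1.
Proof.
rewrite [leLHS]/Num.norm /= mx_normrE; apply/bigmax_leP; split => // -[a b] _ /=.
by rewrite mxE; case: (_ && _); rewrite ?normr1 ?normr0.
Qed.

Lemma ball_sub (R : realType) (k : nat) (K : set 'cV[R]_k) u :
  interior K u -> exists2 r : R, 0 < r & forall v, `|u - v| < r -> K v.
Proof.
rewrite /interior /= => /nbhs_ballP [r r0 Hr]; exists r => // v uv.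
by apply: Hr; rewrite -ball_normE.
Qed.

Lemma near_in (R : realType) (k : nat) (K : set 'cV[R]_k) u v :
  interior K u -> exists2 e : R, 0 < e & forall t, 0 < t < e -> K (t *: v + u).
Proof.
move=> /ball_sub [r r0 Hr]; exists (r / (`|v| + 1)).
  by rewrite divr_gt0 // ltr_wpDl.
move=> t /andP[t0 te]; apply: Hr.
have -> : u - (t *: v + u) = - (t *: v) by rewrite opprD addrCA subrr addr0.
rewrite normrN normrZ gtr0_norm //.
have v1 : 0 < `|v| + 1 by rewrite ltr_wpDl.
apply: (@le_lt_trans _ _ (t * (`|v| + 1))); first by rewrite ler_pM2l // lerDl.
by rewrite -ltr_pdivlMr.
Qed.

Lemma SG (R : realType) (k : nat) (h : 'cV[R]_k -> \bar R) mu u w :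
  (forall x, h x != -oo%E) -> strongly_convex mu h ->
  (forall x, interior (edom h) x -> differentiable (fun z => fine (h z)) x) ->
  interior (edom h) u -> edom h w ->
  fine (h u) + dotv (grad h u) (w - u) <= fine (h w).
Proof.
move=> nm sc dF Iu Kw; have Ku := interior_subset Iu.
rewrite /grad -derive_dotv ?dF //.
suff : 'D_(w - u) (fun z => fine (h z)) u <= fine (h w) - fine (h u) by lra.
apply: (@dirUB _ _ _ _ _ _ 1) => [|//|t /andP[t0 t1]]; first exact: dF.
have -> : t *: (w - u) + u = t *: w + (1 - t) *: u.
  by apply/matrixP => i j; rewrite !mxE; ring.
have [_ /=] := convF nm sc Kw Ku (l:=t) (ltac:(by rewrite t0 t1)).
move=> H; rewrite -[X in _ <= X](mulKf (lt0r_neq0 t0)) ler_pM2l ?invr_gt0 //.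
  by rewrite mulrBr; lra.
exact: dF.
Qed.

Lemma fermat (R : realType) (k : nat) (h : 'cV[R]_k -> \bar R) x c :
  (forall x, interior (edom h) x -> differentiable (fun z => fine (h z)) x) ->
  interior (edom h) x ->
  (forall z, edom h z -> fine (h x) + dotv x c <= fine (h z) + dotv z c) ->
  grad h x = - c.
Proof.
move=> dF Ix Hmin.
have key : forall v, - dotv v c <= dotv (grad h x) v.
  move=> v; rewrite /grad -derive_dotv; last exact: dF.
  have [e e0 He] := near_in v Ix.
  apply: (dirLB (dF _ Ix) e0) => t /andP[t0 te].
  have := Hmin _ (He t (ltac:(by rewrite t0 te))).
  rewrite dotvDl dotvZl => H.
  rewrite -[leLHS](mulKf (lt0r_neq0 t0)) ler_pM2l ?invr_gt0 //; lra.
apply/matrixP => i j; rewrite [j]ord1 [RHS]mxE.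
have := key (delta_mx i 0); have := key (- delta_mx i 0).
rewrite !dotvNr !dotvNl !dotv_delta (dotvC (delta_mx i 0)) dotv_delta; lra.
Qed.

Lemma interior_min (R : realType) (k : nat) (h : 'cV[R]_k -> \bar R) mu c x :
  (forall x, h x != -oo%E) -> strongly_convex mu h -> essentially_smooth h ->
  edom h x ->
  (forall z, edom h z -> fine (h x) + dotv x c <= fine (h z) + dotv z c) ->
  interior (edom h) x.
Proof.
move=> nm sc [[z0 Iz0] [dF Hbd]] Kx Hmin.
have [//|nIx] := pselect (interior (edom h) x); exfalso.
set K := edom h in Kx Hmin Iz0 dF Hbd nIx.
set F := fun z => fine (h z) in Hmin.
have [r r0 Hr] := ball_sub Iz0.
set dl := r / 2.
have dl0 : 0 < dl by rewrite divr_gt0.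
have dlr : dl < r by rewrite /dl ltr_pdivrMr // ltr_pMr // ltr1n.
set d := z0 - x.
pose t (m : nat) : R := (m.+2%:R)^-1.
have t01 : forall m, 0 < t m < 1.
  move=> m; rewrite invr_gt0 ltr0n /= invf_lt1 ?ltr0n // ltr1n //.
pose u m := t m *: d + x.
have Ku : forall m, interior K (u m).
  move=> m; have /andP[tm0 tm1] := t01 m.
  rewrite /interior /=; apply/nbhs_ballP; exists (t m * r) => /=.
    by rewrite mulr_gt0.
  move=> v; rewrite -ball_normE /= => uv.
  set w := z0 + (t m)^-1 *: (v - u m).
  have Kw : K w.
    apply: Hr; rewrite /w opprD addrA subrr sub0r normrN normrZ.
    rewrite gtr0_norm ?invr_gt0 // -ltr_pdivlMl ?invr_gt0 // invrK.
    by rewrite -normrN opprB.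
  have -> : v = t m *: w + (1 - t m) *: x.
    apply/matrixP => i j; rewrite /w /u !mxE; field.
    by rewrite lt0r_neq0.
  by case: (convF nm sc Kw Kx (l := t m) (t01 m)).
have cu : u @ \oo --> x.
  have ct : t @ \oo --> (0 : R).
    have := @cvg_harmonic R; rewrite -cvg_shiftS.
    apply: cvg_trans; apply: near_eq_cvg; apply: nearW => m.
    by rewrite /t /harmonic /=.
  have := cvgD (cvgZ ct (cvg_cst d)) (cvg_cst x).
  move=> /(_ eventually_filter eventually_filter eventually_filter eventually_filter).
  by rewrite scale0r add0r.
have Hinf := Hbd u x Ku cu (subset_closure Kx) nIx.
pose w (i : 'I_k) (s : R) := z0 + (s * dl) *: delta_mx i 0.
have Kw : forall i s, `|s| = 1 -> K (w i s).
  move=> i s s1; apply: Hr; rewrite /w opprD addrA subrr sub0r normrN normrZ.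
  rewrite normrM s1 mul1r gtr0_norm //; apply: le_lt_trans dlr.
  by rewrite -[leRHS]mulr1 ler_pM2l // norm_delta.
set dc := dotv d c.
pose Tw i := `|F (w i 1)| + `|F (w i (-1))|.
pose S := \sum_i Tw i + `|F x| + `|dc|.
have TwS : forall i, Tw i <= \sum_j Tw j.
  move=> i; rewrite (bigD1 i) //= lerDl sumr_ge0 // => j _.
  by rewrite addr_ge0.
have bnd : forall m, `|grad h (u m)| <= S / dl.
  move=> m; set g := grad h (u m); have /andP[tm0 tm1] := t01 m.
  have Kum := interior_subset (Ku m).
  have h1 : F x + dotv x c <= F (u m) + (t m * dc + dotv x c).
    by have := Hmin _ Kum; rewrite {2}/u dotvDl dotvZl.
  have h2 := SG nm sc dF (Ku m) Kx; rewrite -/g in h2.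
  have E : x - u m = - (t m *: d).
    by apply/matrixP => i j; rewrite /u !mxE; ring.
  rewrite E dotvNr dotvZr in h2.
  have gd : - dc <= dotv g d.
    have : 0 <= t m * (dotv g d + dc).
      rewrite mulrDr; rewrite /F /= in h1 h2; lra.
    by rewrite pmulr_rge0 // => ?; lra.
  have gd2 : 0 <= (1 - t m) * (dotv g d + dc).
    by apply: mulr_ge0; lra.
  have hi : forall i s, `|s| = 1 ->
      s * dl * g i 0 <= `|F (w i s)| + `|F x| + `|dc|.
    move=> i s s1; have h3 := SG nm sc dF (Ku m) (Kw i s s1).
    have E3 : w i s - u m = (1 - t m) *: d + (s * dl) *: delta_mx i 0.
      by apply/matrixP => a b; rewrite /w /u /d !mxE; ring.
    rewrite E3 dotvDr !dotvZr dotv_delta in h3.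
    have := ler_norm (F (w i s)); have := ler_norm dc.
    have := ler_norm (- F x); rewrite normrN.
    rewrite /F /= in h1 h2 h3 *; lra.
  rewrite [leLHS]/Num.norm /= mx_normrE; apply/bigmax_leP; split => [|[a b] _ /=].
    apply: divr_ge0 (ltW dl0); rewrite /S !addr_ge0 // sumr_ge0 // => i _; by rewrite /Tw addr_ge0.
  rewrite [b]ord1 ler_pdivlMr // mulrC -(gtr0_norm dl0) -normrM ler_norml; apply/andP; split.
    have := hi a (-1) (ltac:(by rewrite normrN normr1)); have := TwS a.
    have := normr_ge0 (F (w a 1)); rewrite /S /Tw; lra.
  have := hi a 1 (ltac:(by rewrite normr1)); have := TwS a.
  have := normr_ge0 (F (w a (-1))); rewrite /S /Tw; lra.
move/cvgryPge: Hinf => /(_ (S / dl + 1)) /filter_ex [m /= Hm].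
by have := bnd m; lra.
Qed.

Lemma argmin_grad (R : realType) (k : nat) (h : 'cV[R]_k -> \bar R) mu c x :
  (forall x, h x != -oo%E) -> strongly_convex mu h -> essentially_smooth h ->
  is_argmin (fun z => (h z + (dotv z c)%:E)%E) x -> grad h x = - c.
Proof.
move=> nm sc es Hmin.
have [[z0 Iz0] [dF _]] := es.
have Kz0 := interior_subset Iz0.
have Kx : edom h x.
  rewrite /edom /= ltey; apply/negP => /eqP hx.
  by have := Hmin z0; rewrite /= hx (finK nm Kz0).
have Hm : forall z, edom h z -> fine (h x) + dotv x c <= fine (h z) + dotv z c.
  by move=> z Kz; have := Hmin z; rewrite /= (finK nm Kx) (finK nm Kz).
exact: fermat dF (interior_min nm sc es Kx Hm) Hm.
Qed.

Lemma argmin_ext (R : realType) (k : nat) (phi psi : 'cV[R]_k -> \bar R) x :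
  (forall z, phi z = psi z) -> is_argmin phi x -> is_argmin psi x.
Proof. by move=> e H z; rewrite -!e. Qed.

Lemma lin_step (R : realType) (n p : nat) (A : 'M[R]_(n, p)) (r : R)
   (ys yb : 'cV[R]_n) (z : 'cV[R]_p) :
  - (1 - r) * dotv z (- (A^T *m ys)) + r * dotv z (A^T *m yb)
  = dotv z (A^T *m ((1 - r) *: ys + r *: yb)).
Proof.
by rewrite mulmxDr -!scalemxAr dotvDr !dotvZr dotvNr; ring.
Qed.

Theorem proposition2 (R : realType) (n p : nat) (A : 'M[R]_(n, p))
  (f : 'cV[R]_n -> R) (h : 'cV[R]_p -> \bar R) (mu : R)
  (rho : nat -> R) (y0 : 'cV[R]_n) :
  convex_fun f -> lipschitz_fun f ->
  (forall x, h x != -oo%E) ->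
  lower_semicontinuous h -> strongly_convex mu h -> essentially_smooth h ->
  (forall t : nat, (1 <= t)%N -> 0 <= rho t <= 1) ->
  edom (fenchel f) y0 ->
  forall (x : nat -> 'cV[R]_p) (y ybar : nat -> 'cV[R]_n),
    y 0%N = y0 ->
    (forall s : nat, y s.+1 = (1 - rho s.+1) *: y s + rho s.+1 *: ybar s) ->
    (gcg_rec A f h x y ybar <-> md_rec A f h rho y0 x ybar) /\
    (gcg_rec A f h x y ybar -> forall t : nat, grad h (x t) = - (A^T *m y t)).
Proof.
move=> _ _ nm _ sc es _ _ x y ybar y00 yS.
have G : gcg_rec A f h x y ybar -> forall t, grad h (x t) = - (A^T *m y t).
  by move=> H t; apply: (argmin_grad nm sc es (H t).1).
split => //; split.
- move=> H; split; first by rewrite -y00; exact: (H 0%N).1.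
  move=> s; split; first exact: (H s).2.
  apply: argmin_ext (H s.+1).1 => z.
  by rewrite (G H s) lin_step -yS.
- case=> H0 Hs.
  have P : forall s, is_argmin (fun z => (h z + (dotv z (A^T *m y s))%:E)%E) (x s).
    elim=> [|s IH]; first by rewrite y00.
    apply: argmin_ext (Hs s).2 => z.
    by rewrite (argmin_grad nm sc es IH) lin_step -yS.
  by move=> s; split; [exact: P | exact: (Hs s).1].
Qed.
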